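(* In a single positioning infrastructure in which $N_{\text{min}}$ is the minimum number of anchors required for positioning, a subset of anchors containing at least one manipulated (adversarial) pseudorange can contain at most $N_{\text{min}}-1$ benign pseudoranges without being detected; that is, any subset containing at least one adversarial and at least $N_{\text{min}}$ benign pseudoranges yields an inconsistent overdetermined system.
   Context: Idealized model: a platform at unknown true position in $\mathbf{R}^3$ receives ranging measurements (pseudoranges) from anchors with known positions; positioning from a subset solves a system with $N_{\text{min}}$ unknowns (e.g., 3D position plus receiver clock bias for GNSS, $N_{\text{min}}=4$) using one equation per anchor in the subset. Noise is taken to be negligible while attacker-induced deviations are preserved, and anchor geometry is good (the equations are linearly independent). Benign pseudoranges are exactly consistent with the true position; adversarial pseudoranges are deviated by the attacker. *)

(* Defs.v *)
(* Linearized (idealized, noise-free) positioning model.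
   m anchors, Nmin unknowns (state vector x : 'cV_Nmin). *)
From HB Require Import structures.
From mathcomp Require Import all_boot all_order all_algebra.
Set Implicit Arguments. Unset Strict Implicit. Unset Printing Implicit Defensive.
Import Order.TTheory GRing.Theory Num.Theory.
Local Open Scope ring_scope.

Definition good_geometry (R : fieldType) (m Nmin : nat) (A : 'M[R]_(m, Nmin)) :=
  forall f : 'I_Nmin -> 'I_m, injective f -> row_free (rowsub f A).

Definition benign_adversarial (R : fieldType) (m Nmin : nat)
  (A : 'M[R]_(m, Nmin)) (rho : 'I_m -> R) (xtrue : 'cV[R]_Nmin) (B : {set 'I_m}) :=
  (forall i, i \in B -> rho i = (A *m xtrue) i 0) /\
  (forall i, i \notin B -> rho i != (A *m xtrue) i 0).

Definition consistent (R : fieldType) (m Nmin : nat)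
  (A : 'M[R]_(m, Nmin)) (rho : 'I_m -> R) (S : {set 'I_m}) :=
  exists x : 'cV[R]_Nmin, forall i, i \in S -> (A *m x) i 0 = rho i.

(* Main.v *)
Require Import Defs.
From HB Require Import structures.
From mathcomp Require Import all_boot all_order all_algebra.
Local Open Scope ring_scope.
Import GRing.Theory.

Theorem corollary1 (R : realFieldType) (m Nmin : nat)
  (A : 'M[R]_(m, Nmin)) (rho : 'I_m -> R) (xtrue : 'cV[R]_Nmin)
  (B : {set 'I_m}) :
  good_geometry A ->
  benign_adversarial A rho xtrue B ->
  forall S : {set 'I_m},
    (exists2 i, i \in S & i \notin B) ->
    (Nmin <= #|S :&: B|)%N ->
    ~ consistent A rho S.
Proof.
move=> gg [hB hA] S [i0 i0S i0B] hN [x hx].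
pose C := S :&: B.
pose f (k : 'I_Nmin) : 'I_m := @enum_val _ (mem C) (widen_ord hN k).
have finj : injective f.
  by move=> a b /enum_val_inj/(congr1 val) /= /val_inj.
have fC k : f k \in C by exact: (enum_valP (widen_ord hN k)).
have hrf := gg f finj.
rewrite row_free_unit in hrf.
have eq0 : rowsub f A *m (x - xtrue) = 0.
  rewrite mulmxBr !mul_rowsub_mx; apply/matrixP => k j.
  rewrite !mxE (ord1 j).
  have := fC k; rewrite inE => /andP [kS kB].
  have h1 := hx _ kS; have h2 := hB _ kB; rewrite !mxE in h1 h2.
  by rewrite h1 h2 subrr.
have xe : x = xtrue.
  apply/eqP; rewrite -subr_eq0; apply/eqP.
  by rewrite -(mulKmx hrf (x - xtrue)) eq0 mulmx0.
by move: (hA i0 i0B); rewrite -(hx i0 i0S) xe eqxx.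
Qed.
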